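(* Let $Q$ be an anti-symmetric quiver on vertices $1,\dots,n,\tilde1,\dots,\tilde n$ with exchange matrix $(b_{ij})$. Suppose $\Sigma_Q=(\{x_1,\dots,x_n\},\{F_1^Q,\dots,F_n^Q\})$ is a valid LP seed and $\hat F_i=F_i$ for all $i\in\{1,\dots,n\}$. Let $i$ be a vertex of $Q$ such that there is no path $a\to i\to\tilde a$ for any vertex $a$. Then mutation at $i$ and $\tilde i$ in $Q$ corresponds to LP mutation of $\Sigma_Q$ at $i$, i.e. $$\Big(\{x_1,\dots,\tfrac{F_i}{x_i},\dots,x_n\},\{F_1^{\mu_i\circ\mu_{\tilde i}(Q)},\dots,F_n^{\mu_i\circ\mu_{\tilde i}(Q)}\}\Big)=\mu_i\big(\{x_1,\dots,x_n\},\{F_1^Q,\dots,F_n^Q\}\big).$$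
   Context: A quiver $Q$ (no loops) is encoded by the skew-symmetric matrix $b_{ij}=$ (number of arrows $i\to j$) $-$ (number of arrows $j\to i$); $\mu_k$ denotes Fomin–Zelevinsky quiver mutation. $Q$ on vertices $1,\dots,n,\tilde1,\dots,\tilde n$ (with $\tilde{\tilde i}=i$) is anti-symmetric if $i\to j$ iff $\tilde j\to\tilde i$ for all vertices $i,j$, and there is no arrow $i\to\tilde i$. For $j\in\{1,\dots,n\}$ set $F_j^Q=\prod_{b_{ij}+b_{\tilde ij}>0}x_i^{b_{ij}+b_{\tilde ij}}+\prod_{b_{ij}+b_{\tilde ij}<0}x_i^{-(b_{ij}+b_{\tilde ij})}$, products over $i\in\{1,\dots,n\}$, in $\mathbb{Z}[x_1,\dots,x_n]$. LP seed over $R=\mathbb{Z}$: $(\mathbf x,\mathbf F)$ with $\mathbf x$ a transcendence basis of the field and each $F_i$ an irreducible polynomial not involving $x_i$ and not equal to any $x_k$. Normalisation: $\hat F_j=F_j/\prod_{k\ne j}x_k^{a_k}$ where $a_k\ge0$ is maximal such that $F_k^{a_k}$ divides $F_j|_{x_k\leftarrow F_k/x}$ in $R[x_1,\dots,x_{k-1},x^{\pm1},x_{k+1},\dots,x_n]$. LP mutation at $i$: $x_i'=\hat F_i/x_i$, $x_j'=x_j$ ($j\ne i$); if $x_i\notin F_j$ then $F_j'=F_j$; otherwise $G_j=F_j|_{x_i\leftarrow \hat F_i|_{x_j\leftarrow0}/x_i'}$, $H_j$ = $G_j$ with all common factors with $\hat F_i|_{x_j\leftarrow0}$ divided out, and $F_j'=MH_j$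 with $M$ the unique monic Laurent monomial in the new variables such that $F_j'$ is a polynomial not divisible by any new variable. Exchange polynomials are defined up to units of $R$. *)

(* Defs.v *)
From HB Require Import structures.
From mathcomp Require Import all_boot all_order all_algebra.
From mathcomp Require Import fraction.
From mathcomp Require Import mpoly.
Set Implicit Arguments. Unset Strict Implicit. Unset Printing Implicit Defensive.
Import Order.TTheory GRing.Theory Num.Theory.
Local Open Scope ring_scope.
Notation "x %:F" := (@FracField.tofrac _ x) : ring_scope.

(* Vertices 1..n are [lshift n k], vertices ~1..~n are [rshift n k]. *)
Definition tl (n : nat) (v : 'I_(n + n)) : 'I_(n + n) :=
  match split v with inl k => rshift n k | inr k => lshift n k end.

Definition skew_sym (n : nat) (B : 'M[int]_(n + n)) : Prop :=
  forall a b, B a b = - B b a.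

Definition anti_symmetric (n : nat) (B : 'M[int]_(n + n)) : Prop :=
  (forall a b, B a b = B (tl b) (tl a)) /\ (forall a, B a (tl a) = 0).

Definition mu (m : nat) (k : 'I_m) (B : 'M[int]_m) : 'M[int]_m :=
  \matrix_(a, b)
    (if (a == k) || (b == k) then - B a b
     else B a b + Num.max (B a k) 0 * Num.max (B k b) 0
                - Num.max (- B a k) 0 * Num.max (- B k b) 0).

Definition Fcoef (n : nat) (B : 'M[int]_(n + n)) (j k : 'I_n) : int :=
  B (lshift n k) (lshift n j) + B (rshift n k) (lshift n j).

Definition FQ (n : nat) (B : 'M[int]_(n + n)) (j : 'I_n) : {mpoly int[n]} :=
  \prod_(k < n | 0 < Fcoef B j k) 'X_k ^+ absz (Fcoef B j k)
  + \prod_(k < n | Fcoef B j k < 0) 'X_k ^+ absz (Fcoef B j k).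

Definition mdvd (n : nat) (p q : {mpoly int[n]}) : Prop :=
  exists r, q = p * r.

Definition mirreducible (n : nat) (p : {mpoly int[n]}) : Prop :=
  p != 0 /\ p \isn't a GRing.unit /\
  forall a b, p = a * b -> a \is a GRing.unit \/ b \is a GRing.unit.

Definition involves (n : nat) (p : {mpoly int[n]}) (k : 'I_n) : bool :=
  has (fun m : 'X_{1..n} => (0 < m k)%N) (msupp p).

Definition Xf (n : nat) (k : 'I_n) : {fraction {mpoly int[n]}} :=
  ('X_k : {mpoly int[n]})%:F.

Definition Xmf (n : nat) (m : 'X_{1..n}) : {fraction {mpoly int[n]}} :=
  ('X_[m] : {mpoly int[n]})%:F.

Definition subst1 (n : nat) (p : {mpoly int[n]}) (k : 'I_n)
    (r : {fraction {mpoly int[n]}}) : {fraction {mpoly int[n]}} :=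
  mmap (fun c : int => c%:~R) (fun l => if l == k then r else Xf l) p.

Definition subst0 (n : nat) (p : {mpoly int[n]}) (k : 'I_n) : {mpoly int[n]} :=
  mmap (fun c : int => c%:MP) (fun l => if l == k then 0 else 'X_l) p.

Definition valid_LP_seed (n : nat) (F : 'I_n -> {mpoly int[n]}) : Prop :=
  forall j, [/\ mirreducible (F j), ~~ involves (F j) j
              & forall k, F j <> 'X_k].

(* F_k^a divides F_j|_{x_k <- F_k/x} in R[x_1,..,x^{+-1},..,x_n]; the new
   variable x is represented by the (now free) slot x_k, and a Laurent
   polynomial in x is Q / x^e with Q a polynomial. *)
Definition laurent_div (n : nat) (F : 'I_n -> {mpoly int[n]}) (j k : 'I_n)
    (a : nat) : Prop :=
  exists (Q : {mpoly int[n]}) (e : nat),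
    subst1 (F j) k ((F k)%:F / Xf k) * Xf k ^+ e = ((F k) ^+ a * Q)%:F.

Definition max_exp (n : nat) (F : 'I_n -> {mpoly int[n]}) (j k : 'I_n)
    (a : nat) : Prop :=
  laurent_div F j k a /\ ~ laurent_div F j k a.+1.

Definition is_hat (n : nat) (F : 'I_n -> {mpoly int[n]}) (j : 'I_n)
    (h : {fraction {mpoly int[n]}}) : Prop :=
  exists a : 'I_n -> nat,
    (forall k, k != j -> max_exp F j k (a k)) /\
    h = (F j)%:F / \prod_(k < n | k != j) Xf k ^+ a k.

(* F'j is (up to units of Z) the new exchange polynomial F_j' produced by LP
   mutation at i, where Fhat = \hat F_i.  F'j is written in the new cluster
   variables (slot i stands for x_i'). *)
Definition lp_exchange (n : nat) (F : 'I_n -> {mpoly int[n]}) (i : 'I_n)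
    (Fhat : {mpoly int[n]}) (j : 'I_n) (F'j : {mpoly int[n]}) : Prop :=
  if ~~ involves (F j) i then F'j = F j \/ F'j = - F j
  else
    let P := subst0 Fhat j in
    let G := subst1 (F j) i (P%:F / Xf i) in
    (* H_j = H * X^b / X^a, with G_j = D * H_j and D collecting exactly the
       common factors with P; F_j' = M * H_j with M a monic Laurent monomial *)
    exists (D H : {mpoly int[n]}) (a b c d : 'X_{1..n}),
      [/\ G * Xmf a = (D * H)%:F * Xmf b,
          (forall q, mirreducible q -> mdvd q D -> mdvd q P),
          (forall q, mdvd q H -> mdvd q P -> q \is a GRing.unit),
          F'j%:F * Xmf c = H%:F * Xmf d
        & forall k, ~ mdvd 'X_k F'j].

Definition lp_mutation (n : nat) (F : 'I_n -> {mpoly int[n]}) (i : 'I_n)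
    (x' : 'I_n -> {fraction {mpoly int[n]}}) (F' : 'I_n -> {mpoly int[n]})
    : Prop :=
  exists Fhat : {mpoly int[n]},
    [/\ is_hat F i Fhat%:F,
        (forall k, x' k = if k == i then Fhat%:F / Xf i else Xf k)
      & forall j, lp_exchange F i Fhat j (F' j)].

(* Main.v *)
Require Import Defs.
From HB Require Import structures.
From mathcomp Require Import all_boot all_order all_algebra.
From mathcomp Require Import fraction.
From mathcomp Require Import mpoly.
From mathcomp Require Import zify ring lra.
Import Order.TTheory GRing.Theory Num.Theory.
Set Implicit Arguments. Unset Strict Implicit. Unset Printing Implicit Defensive.
Local Open Scope ring_scope.

Lemma subst0E n (p : {mpoly int[n]}) k :
  subst0 p k = mmap (@mpolyC n int) (fun l => if l == k then 0 else 'X_l) p.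
Proof. by []. Qed.

Lemma subst0M n (p q : {mpoly int[n]}) k : subst0 (p * q) k = subst0 p k * subst0 q k.
Proof. by rewrite !subst0E rmorphM. Qed.

Lemma subst0X n k (m : 'X_{1..n}) :
  subst0 'X_[m] k = if m k == 0%N then 'X_[m] else 0.
Proof.
rewrite subst0E mmapX /mmap1; case: eqP => h.
  rewrite mpolyXE_id; apply: eq_bigr => l _; case: eqP => // ->.
  by rewrite h !expr0.
rewrite (bigD1 k) //= eqxx expr0n.
by move/eqP/negbTE: h => ->; rewrite mul0r.
Qed.

Lemma subst0Xk n (k : 'I_n) : subst0 'X_k k = 0.
Proof. by rewrite subst0X mnm1E eqxx. Qed.

Lemma subst0_sum n (f : {mpoly int[n]}) k :
  subst0 f k = \sum_(m <- msupp f | m k == 0%N) f@_m *: 'X_[m].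
Proof.
rewrite {1}(mpolyE f) subst0E raddf_sum /= [RHS]big_mkcond /=.
apply: eq_bigr => m _; rewrite mmapZ -subst0E subst0X.
by case: ifP => _; rewrite ?mulr0 // mul_mpolyC.
Qed.

Lemma subst0_dvd n (f : {mpoly int[n]}) k :
  subst0 f k = 0 -> exists g, f = 'X_k * g.
Proof.
move=> h0.
exists (\sum_(m <- msupp f | m k != 0%N) f@_m *: 'X_[m - U_(k)]).
rewrite {1}(mpolyE f) (bigID (fun m : 'X_{1..n} => m k == 0%N)) /=.
rewrite -subst0_sum h0 add0r mulr_sumr; apply: eq_bigr => m hm.
rewrite -scalerAr -mpolyXD; congr (_ *: 'X_[_]).
apply/mnmP => l; rewrite mnmDE mnmBE mnm1E; case: eqP => [<-|_]; lia.
Qed.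

Lemma dvd_subst0 n (f g : {mpoly int[n]}) k : f = 'X_k * g -> subst0 f k = 0.
Proof. by move=> ->; rewrite subst0M subst0Xk mul0r. Qed.

Lemma mpolyX_neq0 n (m : 'X_{1..n}) : ('X_[m] : {mpoly int[n]}) != 0.
Proof.
apply/eqP => h; have := @mcoeffX n int m m.
by rewrite h mcoeff0 eqxx.
Qed.

Lemma mono_div n (p : 'X_{1..n}) (q r : {mpoly int[n]}) :
  q * r = 'X_[p] -> exists c w, c \is a GRing.unit /\ q = c%:MP * 'X_[w].
Proof.
move: {2}(mdeg p) (erefl (mdeg p)) => d; elim: d p q r => [|d IH] p q r hd hqr.
  move/eqP: hd; rewrite mdeg_eq0 => /eqP hp.
  rewrite hp mpolyX0 in hqr.
  have : r * q = 1 by rewrite mulrC.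
  move/mpoly_intro_unit => /andP [/eqP hq hu].
  by exists q@_0, 0%MM; split => //; rewrite mpolyX0 mulr1.
have [k hk] : exists k, (0 < p k)%N.
  case: (pickP (fun k => 0 < p k)%N) => [k hk|h0]; first by exists k.
  move: hd; rewrite mdegE big1 // => l _; move: (h0 l) => /=; lia.
have hpk : p = (U_(k) + (p - U_(k)))%MM.
  apply/mnmP => l; rewrite mnmDE mnmBE mnm1E; case: eqP => [<-|_]; lia.
have hd' : mdeg (p - U_(k))%MM = d.
  move: hd; rewrite {1}hpk mdegD mdeg1; lia.
have hX : 'X_k != 0 :> {mpoly int[n]} by apply: mpolyX_neq0.
have : subst0 q k * subst0 r k = 0.
  by rewrite -subst0M hqr subst0X; move: hk; case: eqP => //; lia.
move/eqP; rewrite mulf_eq0 => /orP [] /eqP /subst0_dvd [g hg].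
  have : 'X_k * (g * r) = 'X_k * 'X_[p - U_(k)].
    by rewrite mulrA -hg hqr -mpolyXD -hpk.
  move/(mulfI hX) => /(IH _ _ _ hd') [c [w [hc hw]]].
  exists c, (U_(k) + w)%MM; split => //.
  by rewrite hg hw mpolyXD mulrCA.
have : 'X_k * (q * g) = 'X_k * 'X_[p - U_(k)].
  by rewrite mulrCA -hg hqr -mpolyXD -hpk.
by move/(mulfI hX) => /(IH _ _ _ hd').
Qed.
Definition Sf (x y : int) : int :=
  Num.max x 0 * Num.max y 0 - Num.max (- x) 0 * Num.max (- y) 0.

Lemma sgcase (x : int) :
  [/\ x < 0, Num.max x 0 = 0 & Num.max (- x) 0 = - x] \/
  [/\ x = 0, Num.max x 0 = 0 & Num.max (- x) 0 = 0] \/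
  [/\ 0 < x, Num.max x 0 = x & Num.max (- x) 0 = 0].
Proof.
rewrite /Order.max; have : x < 0 \/ x = 0 \/ 0 < x by lia.
case=> [h|[h|h]].
- left; split => //; repeat (case: ifP => ?); lia.
- by right; left; subst.
- right; right; split => //; repeat (case: ifP => ?); lia.
Qed.

Ltac sgs x := let h := fresh "h" in
  case: (sgcase x) => [[h -> ->]|[[h -> ->]|[h -> ->]]]; [| subst x |].

Lemma key_int (a b s t : int) :
  ~ (0 < a /\ 0 < b) -> ~ (a < 0 /\ b < 0) -> ~ (0 < s /\ 0 < t) -> ~ (s < 0 /\ t < 0) ->
  s + t != 0 ->
  Sf b t + Sf a s + Sf (- a) t + Sf (- b) s =
  (s + t) * (if 0 < t - s then (if a - b < 0 then - (a - b) else 0)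
             else (if 0 < a - b then a - b else 0)).
Proof.
rewrite /Sf => h1 h2 h3 h4 h5.
sgs a; sgs b; sgs s; sgs t; rewrite ?oppr0;
  repeat (case: ifP => ?); first [lia | ring].
Qed.

Lemma zero_int (a b s t : int) : s + t = 0 ->
  Sf b t + Sf a s + Sf (- a) t + Sf (- b) s = 0.
Proof.
move=> h; have -> : t = - s by lia.
by rewrite /Sf !opprK; ring.
Qed.
Definition posm n (c : 'I_n -> int) : 'X_{1..n} :=
  [multinom (if (0 < c k)%R then absz (c k) else 0%N) | k < n].
Definition negm n (c : 'I_n -> int) : 'X_{1..n} :=
  [multinom (if (c k < 0)%R then absz (c k) else 0%N) | k < n].

Lemma FQ_E n (B : 'M[int]_(n + n)) j :
  FQ B j = 'X_[posm (Fcoef B j)] + 'X_[negm (Fcoef B j)].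
Proof.
rewrite /FQ !mpolyXE_id; congr (_ + _); rewrite big_mkcond; apply: eq_bigr => k _;
  by rewrite mnmE; case: ifP.
Qed.

Lemma posm_negm n (c : 'I_n -> int) k : ((posm c k)%:Z - (negm c k)%:Z = c k)%R.
Proof. rewrite !mnmE; case: (ltrgtP 0 (c k)) => h; lia. Qed.

Lemma posm_negm0 n (c : 'I_n -> int) k : (posm c k == 0%N) || (negm c k == 0%N).
Proof. rewrite !mnmE; case: (ltrgtP 0 (c k)) => h; lia. Qed.

Lemma tl_l n (k : 'I_n) : tl (lshift n k) = rshift n k.
Proof. by rewrite /tl (unsplitK (inl _ k)). Qed.
Lemma tl_r n (k : 'I_n) : tl (rshift n k) = lshift n k.
Proof. by rewrite /tl (unsplitK (inr _ k)). Qed.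

Lemma Sf_x0 x : Sf x 0 = 0.
Proof. by rewrite /Sf; case: (sgcase x) => [[_ -> ->]|[[_ -> ->]|[_ -> ->]]]; rewrite ?oppr0 /Order.max ltxx; ring. Qed.
Lemma Sf_0x x : Sf 0 x = 0.
Proof. by rewrite /Sf; case: (sgcase x) => [[_ -> ->]|[[_ -> ->]|[_ -> ->]]]; rewrite ?oppr0 /Order.max ltxx; ring. Qed.

Lemma mu_E m k (B : 'M[int]_m) a b :
  mu k B a b = if (a == k) || (b == k) then - B a b else B a b + Sf (B a k) (B k b).
Proof. by rewrite /mu mxE /Sf; case: ifP => // _; rewrite addrA. Qed.

Lemma posmZ n (c : 'I_n -> int) k : (posm c k)%:Z = if 0 < c k then c k else 0.
Proof. rewrite mnmE; case: ifP => h //; lia. Qed.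
Lemma negmZ n (c : 'I_n -> int) k : (negm c k)%:Z = if c k < 0 then - c k else 0.
Proof. rewrite mnmE; case: ifP => h //; lia. Qed.

Lemma B1_colI n (B : 'M[int]_(n + n)) i : anti_symmetric B ->
  forall a, mu (rshift n i) B a (lshift n i) = B a (lshift n i).
Proof.
move=> [ha1 ha2] a.
have h0 : B (rshift n i) (lshift n i) = 0 by rewrite -(tl_r i) ha2.
rewrite mu_E eq_lrshift orbF; case: eqP => [->|_]; first by rewrite h0 oppr0.
by rewrite h0 Sf_x0 addr0.
Qed.

Lemma B1_rowI n (B : 'M[int]_(n + n)) i : anti_symmetric B ->
  forall b, mu (rshift n i) B (lshift n i) b = B (lshift n i) b.
Proof.
move=> [ha1 ha2] b.
have h0 : B (lshift n i) (rshift n i) = 0 by rewrite -(tl_l i) ha2.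
rewrite mu_E eq_lrshift /=; case: eqP => [->|_]; first by rewrite h0 oppr0.
by rewrite h0 Sf_0x addr0.
Qed.

Lemma Fcoef2_i n (B : 'M[int]_(n + n)) i : anti_symmetric B -> forall k,
  Fcoef (mu (lshift n i) (mu (rshift n i) B)) i k = - Fcoef B i k.
Proof.
move=> ha k; rewrite /Fcoef !(@mu_E _ (lshift n i)) !eqxx !orbT !B1_colI //; ring.
Qed.

Lemma Fcoef2_j n (B : 'M[int]_(n + n)) i j : anti_symmetric B -> skew_sym B -> j != i ->
  forall k, Fcoef (mu (lshift n i) (mu (rshift n i) B)) j k =
  if k == i then - Fcoef B j i else
  Fcoef B j k + (Sf (B (lshift n k) (rshift n i)) (B (rshift n i) (lshift n j))
    + Sf (B (lshift n k) (lshift n i)) (B (lshift n i) (lshift n j))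
    + Sf (- B (lshift n k) (lshift n i)) (B (rshift n i) (lshift n j))
    + Sf (- B (lshift n k) (rshift n i)) (B (lshift n i) (lshift n j))).
Proof.
move=> ha hs hji k; have [ha1 ha2] := ha.
have h0 : B (rshift n i) (lshift n i) = 0 by rewrite -(tl_r i) ha2.
rewrite /Fcoef !(@mu_E _ (lshift n i)) ?eq_lshift ?eq_rlshift ?eq_lrshift (negbTE hji) ?orbF !B1_colI // !B1_rowI //.
rewrite !mu_E ?eq_lshift ?eq_rshift ?eq_rlshift ?eq_lrshift ?orbF.
case: eqP => [->|hki] /=.
  have h0' : B (lshift n i) (rshift n i) = 0 by rewrite -(tl_l i) ha2.
  by rewrite h0 h0' !Sf_0x; ring.
rewrite [B (rshift n k) (rshift n i)]ha1 tl_r tl_r [B (lshift n i) (lshift n k)]hs.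
rewrite [B (rshift n k) (lshift n i)]ha1 tl_r tl_l [B (rshift n i) (lshift n k)]hs.
rewrite /Fcoef; ring.
Qed.

Definition pmv n (B : 'M[int]_(n + n)) i j k : int :=
  if 0 < Fcoef B i j then (negm (Fcoef B i) k)%:Z else (posm (Fcoef B i) k)%:Z.

Definition pathfree n (B : 'M[int]_(n + n)) i :=
  ~ (exists a : 'I_(n + n), 0 < B a (lshift n i) /\ 0 < B (lshift n i) (tl a)).

Lemma Fcoef_ij n (B : 'M[int]_(n + n)) i j : anti_symmetric B -> skew_sym B ->
  Fcoef B i j = - B (lshift n i) (lshift n j) + B (rshift n i) (lshift n j).
Proof.
move=> [ha1 ha2] hs; rewrite /Fcoef [B (lshift n j) _]hs.
by rewrite [B (rshift n j) (lshift n i)]ha1 tl_r tl_l.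
Qed.

Lemma path_st n (B : 'M[int]_(n + n)) i j : anti_symmetric B -> skew_sym B -> pathfree B i ->
  ~ (0 < B (lshift n i) (lshift n j) /\ 0 < B (rshift n i) (lshift n j)) /\
  ~ (B (lshift n i) (lshift n j) < 0 /\ B (rshift n i) (lshift n j) < 0).
Proof.
move=> [ha1 ha2] hs hp; split => -[h1 h2]; apply: hp.
  exists (rshift n j); rewrite tl_r [B (rshift n j) _]ha1 tl_l tl_r; split => //.
exists (lshift n j); rewrite tl_l [B (lshift n j) _]hs [B (lshift n i) (rshift n j)]ha1 tl_l tl_r.
rewrite [B (lshift n j) (rshift n i)]hs; split; lia.
Qed.

Lemma path_ab n (B : 'M[int]_(n + n)) i k : anti_symmetric B -> skew_sym B -> pathfree B i ->
  ~ (0 < B (lshift n k) (lshift n i) /\ 0 < B (lshift n k) (rshift n i)) /\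
  ~ (B (lshift n k) (lshift n i) < 0 /\ B (lshift n k) (rshift n i) < 0).
Proof.
move=> [ha1 ha2] hs hp; split => -[h1 h2]; apply: hp.
  by exists (lshift n k); rewrite tl_l [B (lshift n i) (rshift n k)]ha1 tl_l tl_r.
exists (rshift n k); rewrite tl_r [B (rshift n k) _]ha1 tl_l tl_r.
rewrite [B (rshift n i) (lshift n k)]hs [B (lshift n i) (lshift n k)]hs; split; lia.
Qed.

Lemma Fcoef_ij_neq0 n (B : 'M[int]_(n + n)) i j : anti_symmetric B -> skew_sym B -> pathfree B i ->
  Fcoef B j i != 0 -> Fcoef B i j != 0.
Proof.
move=> ha hs hp; have [h1 h2] := @path_st n B i j ha hs hp.
rewrite (@Fcoef_ij n B i j ha hs) /Fcoef; lia.
Qed.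

Lemma Fcoef2_inv n (B : 'M[int]_(n + n)) i j : anti_symmetric B -> skew_sym B -> pathfree B i ->
  j != i -> Fcoef B j i != 0 -> forall k,
  Fcoef (mu (lshift n i) (mu (rshift n i) B)) j k =
  Fcoef B j k + Fcoef B j i * (pmv B i j k - 2 * (k == i)%:Z).
Proof.
move=> ha hs hp hji hne k; have [ha1 ha2] := ha.
rewrite Fcoef2_j // /pmv posmZ negmZ.
case: eqP => [->|hki].
  have -> : Fcoef B i i = 0.
    have h0 : B (rshift n i) (lshift n i) = 0 by rewrite -(tl_r i) ha2.
    rewrite /Fcoef h0; have := hs (lshift n i) (lshift n i); lia.
  rewrite ltxx if_same; lia.
have [h1 h2] := @path_st n B i j ha hs hp.
have [h3 h4] := @path_ab n B i k ha hs hp.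
have hik : Fcoef B i k = B (lshift n k) (lshift n i) - B (lshift n k) (rshift n i).
  rewrite /Fcoef [B (rshift n k) (lshift n i)]ha1 tl_l tl_r [B (rshift n i) (lshift n k)]hs; ring.
have hne' : B (lshift n i) (lshift n j) + B (rshift n i) (lshift n j) != 0 by [].
rewrite (@Fcoef_ij n B i j ha hs) [in RHS]/Fcoef [B (rshift n k) (lshift n i)]ha1 tl_l tl_r.
rewrite [B (rshift n i) (lshift n k)]hs -/(Fcoef B j k) (key_int h3 h4 h1 h2 hne') /=.
rewrite /Fcoef (addrC (- _)) mulr0 subr0. reflexivity.
Qed.

Lemma Fcoef2_noninv n (B : 'M[int]_(n + n)) i j : anti_symmetric B -> skew_sym B ->
  j != i -> Fcoef B j i = 0 -> forall k,
  Fcoef (mu (lshift n i) (mu (rshift n i) B)) j k = Fcoef B j k.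
Proof.
move=> ha hs hji h0 k; rewrite Fcoef2_j //; case: eqP => [->|_].
  by rewrite h0 oppr0.
by rewrite zero_int ?addr0 //; move: h0; rewrite /Fcoef.
Qed.

Lemma subst0D n (p q : {mpoly int[n]}) k : subst0 (p + q) k = subst0 p k + subst0 q k.
Proof. by rewrite !subst0E raddfD. Qed.

Lemma binom_neq0 n (u v : 'X_{1..n}) : ('X_[u] + 'X_[v] : {mpoly int[n]}) != 0.
Proof.
apply/eqP => h; have := congr1 (mcoeff u) h.
by rewrite mcoeffD !mcoeffX eqxx mcoeff0; case: (v == u).
Qed.

Lemma binom_ndvd n (u v : 'X_{1..n}) k : (u k == 0%N) || (v k == 0%N) ->
  ~ mdvd 'X_k ('X_[u] + 'X_[v] : {mpoly int[n]}).
Proof.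
move=> huv [g hg]; have := dvd_subst0 hg.
rewrite subst0D !subst0X.
move: huv; case: eqP => hu; case: eqP => hv //= _.
- by apply/eqP; apply: binom_neq0.
- by rewrite addr0; apply/eqP; apply: mpolyX_neq0.
- by rewrite add0r; apply/eqP; apply: mpolyX_neq0.
Qed.

Lemma cond3 n (u v p : 'X_{1..n}) : (forall k, (u k == 0%N) || (v k == 0%N)) ->
  forall q : {mpoly int[n]}, mdvd q ('X_[u] + 'X_[v]) -> mdvd q 'X_[p] ->
  q \is a GRing.unit.
Proof.
move=> huv q [r hr] [s hs].
have [c [w [hc hq]]] := mono_div (esym hs).
case: (pickP (fun k => 0 < w k)%N) => [k hk | h0].
  exfalso; apply: (binom_ndvd (huv k)).
  exists (c%:MP * 'X_[w - U_(k)] * r); rewrite hr hq.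
  have -> : 'X_[w] = 'X_k * 'X_[w - U_(k)] :> {mpoly int[n]}.
    rewrite -mpolyXD; congr 'X_[_].
    apply/mnmP => l; rewrite mnmDE mnmBE mnm1E; case: eqP => [<-|_] /=; lia.
  by rewrite mulrA [_ * 'X_k]mulrC -!mulrA.
rewrite hq; have -> : w = 0%MM.
  apply/mnmP => l; rewrite mnm0E; move: (h0 l) => /=; lia.
by rewrite mpolyX0 mulr1 rmorph_unit.
Qed.

Lemma involves_binom n (u v : 'X_{1..n}) i : (u i == 0%N) || (v i == 0%N) ->
  involves ('X_[u] + 'X_[v] : {mpoly int[n]}) i = (0 < u i)%N || (0 < v i)%N.
Proof.
move=> huv; apply/hasP/idP => [[m /msuppD_le] | h].
  by rewrite mem_cat !msuppX !inE => /orP [] /eqP -> ->; rewrite ?orbT.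
case/orP: h => h.
  exists u => //; rewrite mcoeff_msupp mcoeffD !mcoeffX eqxx.
  by have -> : (v == u) = false by apply/eqP => e; move: huv h; rewrite e; lia.
exists v => //; rewrite mcoeff_msupp mcoeffD !mcoeffX eqxx.
by have -> : (u == v) = false by apply/eqP => e; move: huv h; rewrite e; lia.
Qed.
Definition L n (e : 'I_n -> int) : {fraction {mpoly int[n]}} := \prod_(l < n) Xf l ^ e l.

Lemma Xf_neq0 n (l : 'I_n) : Xf l != 0.
Proof. by rewrite /Xf tofrac_eq0 mpolyX_neq0. Qed.

Lemma L_eq n (e1 e2 : 'I_n -> int) : e1 =1 e2 -> L e1 = L e2.
Proof. by move=> h; apply: eq_bigr => l _; rewrite h. Qed.

Lemma LD n (e1 e2 : 'I_n -> int) : L (fun l => e1 l + e2 l) = L e1 * L e2.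
Proof. by rewrite /L -big_split; apply: eq_bigr => l _; rewrite expfzDr // Xf_neq0. Qed.

Lemma Xmf_L n (m : 'X_{1..n}) : Xmf m = L (fun l => (m l)%:Z).
Proof.
by rewrite /Xmf mpolyXE_id rmorph_prod; apply: eq_bigr => l _; rewrite rmorphXn exprnP.
Qed.

Lemma Xf_L n (k : 'I_n) : Xf k = L (fun l => (l == k)%:Z).
Proof.
rewrite /L (bigD1 k) //= eqxx big1 ?mulr1 //.
by move=> l /negbTE ->; rewrite expr0z.
Qed.

Lemma LV n (e : 'I_n -> int) : L (fun l => - e l) = (L e)^-1.
Proof. by rewrite /L -prodfV; apply: eq_bigr => l _; rewrite invr_expz. Qed.

Lemma LXn n (e : 'I_n -> int) (m : nat) : L e ^+ m = L (fun l => e l * m%:Z).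
Proof. by rewrite /L -prodrXl; apply: eq_bigr => l _; rewrite exprnP exprz_exp. Qed.

Lemma L_prod n (g : 'I_n -> 'I_n -> int) :
  \prod_(l < n) L (g l) = L (fun k => \sum_(l < n) g l k).
Proof.
rewrite /L exchange_big; apply: eq_bigr => k _ /=.
apply: esym; apply: (big_morph (fun z => Xf k ^ z)) => [x y|]; last exact: expr0z.
by rewrite expfzDr // Xf_neq0.
Qed.

Lemma subst1_X n (m : 'X_{1..n}) i r :
  subst1 'X_[m] i r = \prod_(l < n) (if l == i then r else Xf l) ^+ m l.
Proof. by rewrite /subst1 /mmap msuppX big_seq1 mcoeffX eqxx mul1r. Qed.

Lemma subst1D n (p q : {mpoly int[n]}) i r : subst1 (p + q) i r = subst1 p i r + subst1 q i r.
Proof. by rewrite /subst1 raddfD. Qed.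

Lemma subst1_XL n i (m p : 'X_{1..n}) :
  subst1 'X_[m] i (Xmf p / Xf i) =
  L (fun k => (m k)%:Z + (m i)%:Z * ((p k)%:Z - 2 * (k == i)%:Z)).
Proof.
have hr : Xmf p / Xf i = L (fun k => (p k)%:Z - (k == i)%:Z).
  by rewrite Xmf_L Xf_L -LV -LD.
rewrite subst1_X.
transitivity (\prod_(l < n) L (fun k =>
   (if l == i then (p k)%:Z - (k == i)%:Z else (k == l)%:Z) * (m l)%:Z)).
  by apply: eq_bigr => l _; case: eqP => _; rewrite ?hr ?Xf_L LXn.
rewrite L_prod; apply: L_eq => k.
rewrite (bigD1 i) //= eqxx.
case: (eqVneq k i) => [->|hki].
  rewrite big1 ?addr0 => [|l hl]; last by rewrite (negbTE hl) eq_sym (negbTE hl) mul0r.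
  lia.
rewrite (bigD1 k) /= ?hki // eqxx big1 ?addr0 => [|l /andP [hli hl]]; last first.
  by rewrite (negbTE hli) eq_sym (negbTE hl) mul0r.
rewrite (negbTE hki); lia.
Qed.

Lemma frac_eq n i (u v p : 'X_{1..n}) (d : 'I_n -> int) :
  (forall k, d k = ((u k)%:Z - (v k)%:Z) + ((u i)%:Z - (v i)%:Z) * ((p k)%:Z - 2 * (k == i)%:Z)) ->
  exists a b : 'X_{1..n},
   subst1 ('X_[u] + 'X_[v]) i (Xmf p / Xf i) * Xmf a =
   ((1 * ('X_[posm d] + 'X_[negm d])) : {mpoly int[n]})%:F * Xmf b.
Proof.
move=> hd.
pose Eu k := (u k)%:Z + (u i)%:Z * ((p k)%:Z - 2 * (k == i)%:Z).
pose g k := Eu k - (posm d k)%:Z.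
exists (negm g), (posm g).
rewrite subst1D !subst1_XL mul1r rmorphD /=.
rewrite -[('X_[posm d])%:F]/(Xmf (posm d)) -[('X_[negm d])%:F]/(Xmf (negm d)).
rewrite !Xmf_L mulrDl mulrDl -!LD.
congr (_ + _); apply: L_eq => k /=; have := posm_negm g k; have := posm_negm d k;
  rewrite hd /g /Eu; nia.
Qed.

Lemma posm_ext n (c1 c2 : 'I_n -> int) : c1 =1 c2 -> posm c1 = posm c2.
Proof. by move=> h; apply/mnmP => k; rewrite !mnmE h. Qed.
Lemma negm_ext n (c1 c2 : 'I_n -> int) : c1 =1 c2 -> negm c1 = negm c2.
Proof. by move=> h; apply/mnmP => k; rewrite !mnmE h. Qed.
Lemma posm_opp n (c : 'I_n -> int) : posm (fun k => - c k) = negm c.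
Proof. apply/mnmP => k; rewrite !mnmE; case: ifP; case: ifP; lia. Qed.
Lemma negm_opp n (c : 'I_n -> int) : negm (fun k => - c k) = posm c.
Proof. apply/mnmP => k; rewrite !mnmE; case: ifP; case: ifP; lia. Qed.

Definition pmm n (B : 'M[int]_(n + n)) i j : 'X_{1..n} :=
  if 0 < Fcoef B i j then negm (Fcoef B i) else posm (Fcoef B i).

Lemma subst0_FQ n (B : 'M[int]_(n + n)) i j : Fcoef B i j != 0 ->
  subst0 (FQ B i) j = 'X_[pmm B i j].
Proof.
move=> h; rewrite FQ_E subst0D !subst0X /pmm !mnmE.
case: (ltrgtP 0 (Fcoef B i j)) h => hc //= _.
- have -> : (`|Fcoef B i j| == 0)%N = false by lia.
  exact: add0r.
- have -> : (`|Fcoef B i j| == 0)%N = false by lia.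
  exact: addr0.
Qed.

Lemma pmv_pmm n (B : 'M[int]_(n + n)) i j k : pmv B i j k = (pmm B i j k)%:Z.
Proof. by rewrite /pmv /pmm; case: ifP. Qed.

Lemma FQ_ext n (B1 B2 : 'M[int]_(n + n)) j1 j2 :
  (forall k, Fcoef B1 j1 k = Fcoef B2 j2 k) -> FQ B1 j1 = FQ B2 j2.
Proof. by move=> h; rewrite !FQ_E (posm_ext h) (negm_ext h). Qed.

Lemma involves_FQ n (B : 'M[int]_(n + n)) j i :
  involves (FQ B j) i = (Fcoef B j i != 0).
Proof.
rewrite FQ_E involves_binom ?posm_negm0 // !mnmE.
case: ltrgtP => h /=; lia.
Qed.

Unset Implicit Arguments.

Theorem proposition4p8 (n : nat) (B : 'M[int]_(n + n)) (i : 'I_n) :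
  skew_sym B -> anti_symmetric B ->
  valid_LP_seed (FQ B) ->
  (forall j : 'I_n, is_hat (FQ B) j (FQ B j)%:F) ->
  ~ (exists a : 'I_(n + n), 0 < B a (lshift n i) /\ 0 < B (lshift n i) (tl a)) ->
  lp_mutation (FQ B) i
    (fun k => if k == i then (FQ B i)%:F / Xf k else Xf k)
    (FQ (mu (lshift n i) (mu (rshift n i) B))).
Proof.
move=> hs ha _ hhat hp.
have hp' : pathfree B i by [].
exists (FQ B i); split; first exact: hhat.
  by move=> k; case: eqP => [->|].
move=> j; rewrite /lp_exchange.
have [->|hji] := eqVneq j i.
  have hii : Fcoef B i i = 0.
    have [ha1 ha2] := ha.
    have h0 : B (rshift n i) (lshift n i) = 0 by rewrite -(tl_r i) ha2.
    rewrite /Fcoef h0; have := hs (lshift n i) (lshift n i); lia.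
  rewrite involves_FQ hii eqxx /=; left.
  rewrite !FQ_E addrC.
  have h2 := @Fcoef2_i n B i ha.
  rewrite (posm_ext h2) (negm_ext h2) posm_opp negm_opp //.
have [h0|hne] := eqVneq (Fcoef B j i) 0.
  rewrite involves_FQ h0 eqxx /=; left.
  by apply: FQ_ext => k; rewrite Fcoef2_noninv.
rewrite involves_FQ hne /=.
have hij := Fcoef_ij_neq0 ha hs hp' hne.
rewrite (subst0_FQ hij).
set B2 := mu (lshift n i) (mu (rshift n i) B).
have hd : forall k, Fcoef B2 j k =
  ((posm (Fcoef B j) k)%:Z - (negm (Fcoef B j) k)%:Z) +
  ((posm (Fcoef B j) i)%:Z - (negm (Fcoef B j) i)%:Z) *
  ((pmm B i j k)%:Z - 2 * (k == i)%:Z).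
  by move=> k; rewrite !posm_negm -pmv_pmm /B2 Fcoef2_inv.
have [a [b hab]] := frac_eq hd.
exists 1, (FQ B2 j), a, b, 0%MM, 0%MM; split.
- by rewrite FQ_E -[('X_[pmm B i j])%:F]/(Xmf (pmm B i j)) hab FQ_E.
- move=> q [hq0 [hqu _]] [r hr]; exfalso; apply/negP: hqu.
  have e : r * q = 1 by rewrite mulrC hr.
  have hu := mpoly_intro_unit e; by rewrite negbK; exact: hu.
- by move=> q hq1 hq2; rewrite FQ_E in hq1; apply: (cond3 _ hq1 hq2) => k; apply: posm_negm0.
- by [].
- by move=> k; rewrite FQ_E; apply: binom_ndvd; apply: posm_negm0.
Qed.
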